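(* Suppose $A$ and $B$ are compact subsets of $\mathbb{R}$ and there exist $a_1, a_2 \in A$ and $b_1, b_2 \in B$ with $a_1 \leq b_1 \leq a_2 \leq b_2$. Then $A$ and $B$ are interleaved. Moreover, if $$\min\{ b_1 - a_1,\ a_2 - b_1,\ b_2 - a_2\} \geq 2\epsilon$$ for some $\epsilon > 0$, then $A$ and $B$ are $\epsilon$-strongly interleaved.
   Context: For a compact set $C \subset \mathbb{R}$, a gap of $C$ is a maximal connected component of $\mathbb{R} \setminus C$ (including the two unbounded components). Two compact sets $C_1, C_2 \subset \mathbb{R}$ are interleaved if neither set is contained in a gap of the other. The Hausdorff distance between compact sets is $d_{\mathrm{H}}(X,Y) = \max\{\sup_{x\in X} d(x,Y), \sup_{y \in Y} d(y,X)\}$. For $\epsilon > 0$, compact sets $A, B$ are $\epsilon$-strongly interleaved if $A'$ and $B'$ are interleaved whenever $A', B'$ are compact subsets of $\mathbb{R}$ with $d_{\mathrm{H}}(A,A') \le \epsilon$ and $d_{\mathrm{H}}(B,B') \le \epsilon$. *)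

(* Defs.v *)
From HB Require Import structures.
From mathcomp Require Import all_boot all_order all_algebra.
From mathcomp Require Import all_classical all_reals all_analysis.
Set Implicit Arguments. Unset Strict Implicit. Unset Printing Implicit Defensive.
Import Order.TTheory GRing.Theory Num.Theory numFieldNormedType.Exports.
Local Open Scope classical_set_scope.
Local Open Scope ring_scope.

Section Defs.
Variable R : realType.

Definition gap (C G : set R) : Prop :=
  exists x, (~` C) x /\ G = connected_component (~` C) x.

Definition in_gap_of (X C : set R) : Prop :=
  exists G, gap C G /\ X `<=` G.

Definition interleaved (C1 C2 : set R) : Prop :=
  ~ in_gap_of C1 C2 /\ ~ in_gap_of C2 C1.

(* d(x, Y) = inf_{y in Y} |x - y|, in the extended reals (+oo if Y empty) *)
Definition dist_set (x : R) (Y : set R) : \bar R :=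
  ereal_inf [set (`|x - y|)%:E | y in Y].

Definition hausdorff_dist (X Y : set R) : \bar R :=
  maxe (ereal_sup [set dist_set x Y | x in X])
       (ereal_sup [set dist_set y X | y in Y]).

Definition strongly_interleaved (eps : R) (A B : set R) : Prop :=
  forall A' B' : set R, compact A' -> compact B' ->
    (hausdorff_dist A A' <= eps%:E)%E -> (hausdorff_dist B B' <= eps%:E)%E ->
    interleaved A' B'.
End Defs.

(* Main.v *)
Require Import Defs.
From HB Require Import structures.
From mathcomp Require Import all_boot all_order all_algebra.
From mathcomp Require Import all_classical all_reals all_analysis.
From mathcomp Require Import lra.
Import Order.TTheory GRing.Theory Num.Theory numFieldNormedType.Exports.
Local Open Scope classical_set_scope.
Local Open Scope ring_scope.

Lemma part1 (R : realType) (A B : set R) (a1 a2 b1 b2 : R) :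
  A a1 -> A a2 -> B b1 -> B b2 ->
  a1 <= b1 -> b1 <= a2 -> a2 <= b2 -> interleaved A B.
Proof.
move=> Ha1 Ha2 Hb1 Hb2 h1 h2 h3.
split => -[G [[x [_ ->]] sub]].
- have /connected_intervalP itv := @component_connected _ (~` B) x.
  have := connected_component_sub (itv a1 a2 (sub _ Ha1) (sub _ Ha2) b1 _).
  by apply => //; rewrite h1 h2.
- have /connected_intervalP itv := @component_connected _ (~` A) x.
  have := connected_component_sub (itv b1 b2 (sub _ Hb1) (sub _ Hb2) a2 _).
  by apply => //; rewrite h2 h3.
Qed.

Lemma dist_attain (R : realType) (x eps : R) (A : set R) :
  compact A -> (dist_set x A <= eps%:E)%E -> exists y, A y /\ `|x - y| <= eps.
Proof.
move=> cA hd.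
have : (dist_set x A < (eps + 1)%:E)%E.
  by apply: (le_lt_trans hd); rewrite lte_fin ltrDl.
case/ereal_inf_lt => _ [y Ay <-] _.
have A0 : A !=set0 by exists y.
have cf : {within A, continuous (fun t : R => `|x - t|)}.
  apply: continuous_subspaceT => t.
  apply: cvg_norm; apply: cvgB; [exact: cvg_cst | exact: cvg_id].
have [c cA' minf] := compact_EVT_min A0 cA cf.
exists c; split; first by rewrite inE in cA'.
have : ((`|x - c|)%:E <= dist_set x A)%E.
  apply: le_ereal_inf_tmp => _ [t At <-]; rewrite lee_fin; apply: minf.
  by rewrite inE.
by move=> h; rewrite -lee_fin; apply: le_trans hd.
Qed.

Lemma haus_pt (R : realType) (eps : R) (A A' : set R) x :
  compact A' -> (hausdorff_dist A A' <= eps%:E)%E -> A x ->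
  exists y, A' y /\ `|x - y| <= eps.
Proof.
move=> cA; rewrite /hausdorff_dist ge_max => /andP[h _] Ax.
apply: dist_attain => //; apply: le_trans h.
by apply: ereal_sup_ubound; exists x.
Qed.

Theorem lemma2p3 (R : realType) (A B : set R) (a1 a2 b1 b2 : R) :
  compact A -> compact B ->
  A a1 -> A a2 -> B b1 -> B b2 ->
  a1 <= b1 -> b1 <= a2 -> a2 <= b2 ->
  interleaved A B /\
  (forall eps : R, 0 < eps ->
     Num.min (b1 - a1) (Num.min (a2 - b1) (b2 - a2)) >= eps *+ 2 ->
     strongly_interleaved eps A B).
Proof.
move=> cA cB Ha1 Ha2 Hb1 Hb2 h1 h2 h3; split; first exact: part1 Ha1 Ha2 Hb1 Hb2 h1 h2 h3.
move=> eps e0; rewrite !le_min => /and3P[e1 e2 e3] A' B' cA' cB' hA hB.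
have [a1' [A1 d1]] := @haus_pt _ _ _ _ _ cA' hA Ha1.
have [a2' [A2 d2]] := @haus_pt _ _ _ _ _ cA' hA Ha2.
have [b1' [B1 d3]] := @haus_pt _ _ _ _ _ cB' hB Hb1.
have [b2' [B2 d4]] := @haus_pt _ _ _ _ _ cB' hB Hb2.
move: d1 d2 d3 d4; rewrite !ler_norml => /andP[d1 d1'] /andP[d2 d2'] /andP[d3 d3'] /andP[d4 d4'].
rewrite mulr2n in e1 e2 e3.
apply: (@part1 _ _ _ _ _ _ _ A1 A2 B1 B2).
- by clear -d1 d3' e1; lra.
- by clear -d3 d2' e2; lra.
- by clear -d2 d4' e3; lra.
Qed.
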